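(* Assume $\mu_n\to0$ and $n^{1/2}\mu_n\to\mathfrak m$ with $0\le\mathfrak m<\infty$, and suppose $\theta_n\in\mathbb R$ satisfies $n^{1/2}\theta_n\to\nu\in\mathbb R\cup\{-\infty,\infty\}$. If $\nu\in\mathbb R$, then $F_{A,n,\theta_n}$ converges weakly to the distribution with cdf $$x\mapsto \mathbf 1(x+\nu\ge0)\,\Phi\Big(-\frac{\nu-x}{2}+\sqrt{\big(\tfrac{\nu+x}{2}\big)^2+\mathfrak m^2}\Big)+\mathbf 1(x+\nu<0)\,\Phi\Big(-\frac{\nu-x}{2}-\sqrt{\big(\tfrac{\nu+x}{2}\big)^2+\mathfrak m^2}\Big).$$ If $|\nu|=\infty$, then $F_{A,n,\theta_n}$ converges weakly to $\Phi$ (the standard normal distribution).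
   Context: Gaussian location model: for each sample size $n$, $y_1,\dots,y_n$ are i.i.d. $N(\theta,1)$ with $\theta\in\mathbb R$ unknown; $\bar y$ is their mean. $P_{n,\theta}$ denotes the probability governing a sample of size $n$ when $\theta$ is the true parameter. Given a nonrandom tuning parameter $\mu_n>0$, the adaptive LASSO estimator is $\hat\theta_A=0$ if $|\bar y|\le\mu_n$ and $\hat\theta_A=\bar y-\mu_n^2/\bar y$ if $|\bar y|>\mu_n$. $F_{A,n,\theta}$ denotes the cdf of $n^{1/2}(\hat\theta_A-\theta)$ under $P_{n,\theta}$. $\Phi$ is the standard normal cdf. *)

(* Defs.v *)
From Stdlib Require Import Reals Lra ClassicalEpsilon.
Open Scope R_scope.

Definition phi (z : R) : R := exp (- (z ^ 2) / 2) / sqrt (2 * PI).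

Definition ind (A : R -> bool) (z : R) : R := if A z then 1 else 0.

(* P(Z in A) = lim_{M -> oo} int_{-M}^{M} phi(z) 1_A(z) dz  (Riemann integrals),
   Z ~ N(0,1). Defined by choice; the value is the (unique) such limit. *)
Definition gauss_P_spec (A : R -> bool) (p : R) : Prop :=
  forall eps, eps > 0 -> exists M0, forall M, M >= M0 ->
    exists pr : Riemann_integrable (fun z => phi z * ind A z) (- M) M,
      Rabs (RiemannInt pr - p) < eps.

Definition gauss_P (A : R -> bool) : R :=
  epsilon (inhabits 0) (gauss_P_spec A).

Definition Rle_b (a b : R) : bool := if Rle_dec a b then true else false.

Definition Phi (x : R) : R := gauss_P (fun z => Rle_b z x).

(* Adaptive LASSO estimator as a function of ybar. *)
Definition thetaA (mu ybar : R) : R :=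
  if Rle_dec (Rabs ybar) mu then 0 else ybar - mu ^ 2 / ybar.

(* cdf of sqrt n (thetaA - theta) under P_{n,theta}: ybar = theta + Z/sqrt n. *)
Definition F_A (mu : R) (n : nat) (theta x : R) : R :=
  gauss_P (fun z =>
    Rle_b (sqrt (INR n) * (thetaA mu (theta + z / sqrt (INR n)) - theta)) x).

Definition cdf_weak_cv (Fn : nat -> R -> R) (G : R -> R) : Prop :=
  forall x, continuity_pt G x -> Un_cv (fun n => Fn n x) (G x).

Definition ind_prop (b : bool) : R := if b then 1 else 0.

Definition G_lim (nu m x : R) : R :=
  ind_prop (Rle_b 0 (x + nu)) *
    Phi (- ((nu - x) / 2) + sqrt (((nu + x) / 2) ^ 2 + m ^ 2))
  + ind_prop (negb (Rle_b 0 (x + nu))) *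
    Phi (- ((nu - x) / 2) - sqrt (((nu + x) / 2) ^ 2 + m ^ 2)).

(* Main.v *)
Require Import Defs.
From Stdlib Require Import Reals Lra Psatz ClassicalEpsilon FunctionalExtensionality RList RiemannInt_SF RiemannInt.
Open Scope R_scope.

Definition K0 := / sqrt (2 * PI).
Lemma K0_pos : 0 < K0.
Proof. unfold K0. apply Rinv_0_lt_compat, sqrt_lt_R0. generalize PI_RGT_0; lra. Qed.

Lemma phi_eq z : phi z = K0 * exp (- (z ^ 2) / 2).
Proof. unfold phi, K0, Rdiv. ring. Qed.

Lemma phi_pos z : 0 < phi z.
Proof. rewrite phi_eq. apply Rmult_lt_0_compat. apply K0_pos. apply exp_pos. Qed.

Lemma exp_nonpos_le1 w : w <= 0 -> exp w <= 1.
Proof. intros H. rewrite <- exp_0. destruct H. left; apply exp_increasing; auto. subst; lra. Qed.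

Lemma phi_le z : phi z <= K0.
Proof. rewrite phi_eq. rewrite <- (Rmult_1_r K0) at 2.
  apply Rmult_le_compat_l. left; apply K0_pos.
  apply exp_nonpos_le1. assert (0 <= z^2) by (apply pow2_ge_0). lra. Qed.

Lemma phi_le_D z : phi z <= 2 * K0 * (1 / (1 + z²)).
Proof. rewrite phi_eq. rewrite Rsqr_pow2.
  assert (H2 : 0 <= z^2) by apply pow2_ge_0.
  assert (H := exp_ineq1_le (z^2/2)).
  assert (E : exp (- z ^ 2 / 2) = / exp (z^2/2)).
  { rewrite <- exp_Ropp. f_equal. field. }
  rewrite E. replace (2 * K0 * (1 / (1 + z^2))) with (K0 * (2 / (1 + z^2))) by (field; lra).
  apply Rmult_le_compat_l. left; apply K0_pos.
  assert (0 < exp (z^2/2)) by apply exp_pos.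
  apply (Rmult_le_reg_r (exp (z^2/2) * (1 + z^2))). apply Rmult_lt_0_compat; lra.
  replace (/ exp (z ^ 2 / 2) * (exp (z ^ 2 / 2) * (1 + z ^ 2))) with (1 + z^2) by (field; lra).
  replace (2 / (1 + z ^ 2) * (exp (z ^ 2 / 2) * (1 + z ^ 2))) with (2 * exp (z^2/2)) by (field; lra).
  lra. Qed.

Lemma phi_cont z : continuity_pt phi z.
Proof. unfold phi. reg. Qed.

Lemma adapted_zero (f : R -> R) a b : a <= b -> (forall x, a < x < b -> f x = 0) ->
  adapted_couple f a b (cons a (cons b nil)) (cons 0 nil).
Proof.
  intros H Hf; unfold adapted_couple; repeat split.
  - unfold ordered_Rlist; intros; simpl in H0; inversion H0;
      [ simpl; assumption | elim (Nat.nle_succ_0 _ H2) ].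
  - simpl; unfold Rmin; destruct (Rle_dec a b); lra.
  - simpl; unfold Rmax; destruct (Rle_dec a b); lra.
  - unfold constant_D_eq, open_interval; intros; simpl in H0.
    inversion H0; [ simpl in *; apply Hf; auto | elim (Nat.nle_succ_0 _ H3) ].
    subst i; exact H1.
Qed.

Lemma int_zero_open (f : R -> R) a b : a <= b -> (forall x, a < x < b -> f x = 0) ->
  Riemann_integrable f a b.
Proof.
  intros H Hf eps.
  assert (HS : IsStepFun f a b).
  { exists (cons a (cons b nil)). exists (cons 0 nil). apply adapted_zero; auto. }
  exists (mkStepFun HS). exists (mkStepFun (StepFun_P4 a b 0)). split.
  - intros t _. simpl. unfold fct_cte. rewrite Rminus_diag, Rabs_R0. lra.
  - rewrite StepFun_P18. rewrite Rmult_0_l, Rabs_R0. apply cond_pos.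
Qed.

Definition fc (c z : R) : R := phi z * Defs.ind (fun z => Rle_b z c) z.

Lemma Rle_b_true a b : a <= b -> Rle_b a b = true.
Proof. unfold Rle_b; destruct (Rle_dec a b); auto; lra. Qed.
Lemma Rle_b_false a b : b < a -> Rle_b a b = false.
Proof. unfold Rle_b; destruct (Rle_dec a b); auto; lra. Qed.

Lemma fc_le c z : z <= c -> fc c z = phi z.
Proof. intros; unfold fc, Defs.ind; rewrite Rle_b_true; auto; ring. Qed.
Lemma fc_gt c z : c < z -> fc c z = 0.
Proof. intros; unfold fc, Defs.ind; rewrite Rle_b_false; auto; ring. Qed.
Lemma fc_bounds c z : 0 <= fc c z <= phi z.
Proof. destruct (Rle_dec z c). rewrite fc_le; auto. generalize (phi_pos z); lra.
  rewrite fc_gt; [|lra]. generalize (phi_pos z); lra. Qed.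

Lemma phi_int a b : Riemann_integrable phi a b.
Proof. destruct (Rle_dec a b).
  apply continuity_implies_RiemannInt; auto. intros; apply phi_cont.
  apply RiemannInt_P1. apply continuity_implies_RiemannInt; [lra|]. intros; apply phi_cont. Qed.

Lemma fc_int_le c a b : a <= b -> Riemann_integrable (fc c) a b.
Proof.
  intros Hab. destruct (Rle_dec b c).
  - apply Riemann_integrable_ext with phi. 2: apply phi_int.
    intros x Hx. rewrite fc_le; auto. unfold Rmax in Hx; destruct (Rle_dec a b); lra.
  - destruct (Rle_dec c a).
    + apply int_zero_open; auto. intros; apply fc_gt; lra.
    + apply RiemannInt_P21 with c; try lra.
      * apply Riemann_integrable_ext with phi. 2: apply phi_int.
        intros x Hx. rewrite fc_le; auto. unfold Rmax in Hx; destruct (Rle_dec a c); lra.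
      * apply int_zero_open; [lra|]. intros; apply fc_gt; lra.
Qed.

Lemma fc_int c a b : Riemann_integrable (fc c) a b.
Proof. destruct (Rle_dec a b). apply fc_int_le; auto. apply RiemannInt_P1, fc_int_le; lra. Qed.

Lemma derive_atan_eq x : derive atan derivable_pt_atan x = 1 / (1 + x²).
Proof. unfold derive. apply derive_pt_atan. Qed.

Lemma cont_datan : continuity (derive atan derivable_pt_atan).
Proof. intros x.
  assert (E : derive atan derivable_pt_atan = fun x => 1 / (1 + x²)).
  { apply functional_extensionality; apply derive_atan_eq. }
  rewrite E. unfold Rsqr. reg. assert (0 <= x*x) by (apply Rle_0_sqr). lra. Qed.

Definition atanC1 := @mkC1 atan derivable_pt_atan cont_datan.

Lemma fc_int_bound c a b (pr : Riemann_integrable (fc c) a b) : a <= b ->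
  RiemannInt pr <= 2 * K0 * PI.
Proof.
  intros Hab.
  pose (prD := RiemannInt_P32 atanC1 a b).
  assert (HD : RiemannInt prD = atan b - atan a) by (apply (FTC_Riemann atanC1)).
  pose (pr2 := RiemannInt_P10 (2*K0) (RiemannInt_P14 a b 0) prD).
  assert (H2 : RiemannInt pr2 = 0 * (b - a) + 2 * K0 * (atan b - atan a)).
  { unfold pr2; rewrite RiemannInt_P13 with (pr1 := RiemannInt_P14 a b 0) (pr2 := prD).
    rewrite RiemannInt_P15, HD. reflexivity. }
  apply Rle_trans with (RiemannInt pr2).
  - apply RiemannInt_P19; auto. intros x _.
    unfold fct_cte. simpl. rewrite derive_atan_eq.
    generalize (fc_bounds c x) (phi_le_D x). lra.
  - rewrite H2. generalize (atan_bound a) (atan_bound b) K0_pos. intros.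
    assert (atan b - atan a <= PI) by lra.
    assert (0 < 2 * K0) by lra. nra.
Qed.

Lemma fc_int_nonneg c a b (pr : Riemann_integrable (fc c) a b) : a <= b -> 0 <= RiemannInt pr.
Proof. intros H. assert (Hb := RiemannInt_const_bound (l:=0) (u:=K0) pr H).
  destruct Hb as [H1 _]. intros x _. generalize (fc_bounds c x) (phi_le x); lra.
  lra. Qed.

Lemma fc_mono c M M' (pr : Riemann_integrable (fc c) (-M) M) (pr' : Riemann_integrable (fc c) (-M') M') :
  0 <= M -> M <= M' -> RiemannInt pr <= RiemannInt pr'.
Proof.
  intros H0 H1.
  assert (E1 := RiemannInt_P26 (fc_int c (-M') (-M)) pr (fc_int c (-M') M)).
  assert (E2 := RiemannInt_P26 (fc_int c (-M') M) (fc_int c M M') pr').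
  assert (0 <= RiemannInt (fc_int c (-M') (-M))) by (apply fc_int_nonneg; lra).
  assert (0 <= RiemannInt (fc_int c M M')) by (apply fc_int_nonneg; lra).
  lra.
Qed.

Lemma Phi_exists c : exists p, gauss_P_spec (fun z => Rle_b z c) p.
Proof.
  set (E := fun y => exists M, 0 <= M /\ exists pr : Riemann_integrable (fc c) (-M) M, y = RiemannInt pr).
  assert (HB : bound E).
  { exists (2 * K0 * PI). intros y [M [HM [pr ->]]]. apply fc_int_bound. lra. }
  assert (HE : exists y, E y).
  { exists (RiemannInt (fc_int c (-0) 0)). exists 0. split. lra. eexists; reflexivity. }
  destruct (completeness E HB HE) as [L [HL1 HL2]].
  exists L. intros eps Heps.
  assert (HM1 : exists M1, 0 <= M1 /\ L - eps < RiemannInt (fc_int c (-M1) M1)).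
  { apply NNPP. intros Hn. assert (L <= L - eps). 2: lra.
    apply HL2. intros y [M [HM [pr ->]]].
    destruct (Rle_dec (RiemannInt pr) (L - eps)) as [h|h]; auto.
    exfalso; apply Hn. exists M; split; auto. rewrite (RiemannInt_P5 _ pr). lra. }
  destruct HM1 as [M1 [HM1a HM1b]].
  exists M1. intros M HM. exists (fc_int c (-M) M).
  assert (RiemannInt (fc_int c (-M1) M1) <= RiemannInt (fc_int c (-M) M)) by (apply fc_mono; lra).
  assert (RiemannInt (fc_int c (-M) M) <= L).
  { apply HL1. exists M; split. lra. eexists; reflexivity. }
  change (Rabs (RiemannInt (fc_int c (-M) M) - L) < eps). apply Rabs_def1; lra.
Qed.

Lemma Phi_spec c : gauss_P_spec (fun z => Rle_b z c) (Phi c).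
Proof. unfold Phi, gauss_P. apply epsilon_spec. apply Phi_exists. Qed.

Lemma Rabs_le_0 x : x <= Rabs x.
Proof. apply RRle_abs. Qed.

Lemma Phi_diff c d : c <= d -> 0 <= Phi d - Phi c <= K0 * (d - c).
Proof.
  intros Hcd.
  assert (key : forall eps, eps > 0 -> -2*eps <= Phi d - Phi c <= K0 * (d - c) + 2 * eps).
  { intros eps Heps.
    destruct (Phi_spec c eps Heps) as [Mc HMc].
    destruct (Phi_spec d eps Heps) as [Md HMd].
    set (M := Rmax (Rmax Mc Md) (Rmax (Rabs c) (Rabs d))).
    assert (H1 : Mc <= M /\ Md <= M /\ Rabs c <= M /\ Rabs d <= M).
    { unfold M; repeat split.
      eapply Rle_trans; [apply Rmax_l|apply Rmax_l].
      eapply Rle_trans; [apply Rmax_r|apply Rmax_l].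
      eapply Rle_trans; [apply Rmax_l|apply Rmax_r].
      eapply Rle_trans; [apply Rmax_r|apply Rmax_r]. }
    destruct H1 as [H1 [H2 [H3 H4]]].
    destruct (HMc M ltac:(lra)) as [prc Hc].
    destruct (HMd M ltac:(lra)) as [prd Hd].
    change (Riemann_integrable (fc c) (-M) M) in prc.
    change (Riemann_integrable (fc d) (-M) M) in prd.
    change (Rabs (RiemannInt prc - Phi c) < eps) in Hc.
    change (Rabs (RiemannInt prd - Phi d) < eps) in Hd.
    set (g := fun x => fc d x + (-1) * fc c x).
    pose (gi := fun a b => RiemannInt_P10 (-1) (fc_int d a b) (fc_int c a b)).
    assert (Eg := RiemannInt_P13 prd prc (gi (-M) M)).
    assert (S1 := RiemannInt_P26 (gi (-M) c) (gi c M) (gi (-M) M)).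
    assert (S2 := RiemannInt_P26 (gi c d) (gi d M) (gi c M)).
    assert (HcM : -M <= c <= M) by (split; [generalize (Rabs_le_0 (-c)); rewrite Rabs_Ropp|generalize (Rabs_le_0 c)]; lra).
    assert (HdM : -M <= d <= M) by (split; [generalize (Rabs_le_0 (-d)); rewrite Rabs_Ropp|generalize (Rabs_le_0 d)]; lra).
    assert (B1 := RiemannInt_const_bound (l:=0) (u:=0) (gi (-M) c) ltac:(lra)).
    assert (B2 := RiemannInt_const_bound (l:=0) (u:=K0) (gi c d) Hcd).
    assert (B3 := RiemannInt_const_bound (l:=0) (u:=0) (gi d M) ltac:(lra)).
    assert (T1 : 0 * (c - -M) <= RiemannInt (gi (-M) c) <= 0 * (c - -M)).
    { apply B1. intros x Hx. rewrite !fc_le by lra. lra. }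
    assert (T2 : 0 * (d - c) <= RiemannInt (gi c d) <= K0 * (d - c)).
    { apply B2. intros x Hx. rewrite fc_le by lra. rewrite fc_gt by lra.
      generalize (phi_pos x) (phi_le x). lra. }
    assert (T3 : 0 * (M - d) <= RiemannInt (gi d M) <= 0 * (M - d)).
    { apply B3. intros x Hx. rewrite !fc_gt by lra. lra. }
    apply Rabs_def2 in Hc. apply Rabs_def2 in Hd.
    split; lra. }
  split.
  - apply Rnot_lt_le; intros Hn.
    assert (Hk := key (-(Phi d - Phi c)/4) ltac:(lra)). lra.
  - apply Rnot_lt_le; intros Hn.
    assert (Hk := key ((Phi d - Phi c - K0 * (d - c))/4) ltac:(lra)). lra.
Qed.

Lemma Phi_lip c d : Rabs (Phi d - Phi c) <= K0 * Rabs (d - c).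
Proof. destruct (Rle_dec c d).
  - rewrite !Rabs_pos_eq; try lra; apply Phi_diff; auto.
  - assert (H := Phi_diff d c ltac:(lra)).
    rewrite Rabs_minus_sym, (Rabs_minus_sym d c). rewrite !Rabs_pos_eq; lra.
Qed.

Lemma Phi_cont x : continuity_pt Phi x.
Proof.
  intros eps Heps. exists (eps / (K0 + 1)). split.
  - apply Rdiv_lt_0_compat; generalize K0_pos; lra.
  - intros y [_ Hy]. simpl in *. unfold Rdist in *.
    eapply Rle_lt_trans. apply Phi_lip.
    assert (0 < K0 + 1) by (generalize K0_pos; lra).
    apply Rle_lt_trans with ((K0 + 1) * Rabs (y - x)).
    apply Rmult_le_compat_r. apply Rabs_pos. lra.
    apply (Rmult_lt_reg_l (/(K0+1))). apply Rinv_0_lt_compat; lra.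
    rewrite <- Rmult_assoc, Rinv_l, Rmult_1_l by lra. unfold Rdiv in Hy. lra.
Qed.
Definition ystar (mu t : R) : R :=
  if Rle_b 0 t then (t + sqrt (t^2 + 4*mu^2))/2 else (t - sqrt (t^2 + 4*mu^2))/2.

Lemma thetaA_le mu y t : 0 < mu -> (thetaA mu y <= t <-> y <= ystar mu t).
Proof.
  intros Hmu.
  assert (Hr0 : 0 <= t^2 + 4*mu^2) by nra.
  set (r := sqrt (t^2 + 4*mu^2)).
  assert (Hr : 0 <= r) by apply sqrt_pos.
  assert (Hr2 : r * r = t^2 + 4*mu^2) by apply sqrt_sqrt, Hr0.
  assert (Hrm : 2*mu <= r) by nra.
  assert (Ht1 : t < r /\ -r < t) by (split; nra).
  unfold thetaA, ystar. fold r.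
  destruct (Rle_dec (Rabs y) mu) as [Hy|Hy].
  - assert (Hy1 : - mu <= y <= mu) by (split; [generalize (RRle_abs (-y)); rewrite Rabs_Ropp | generalize (RRle_abs y)]; lra). unfold Rle_b. destruct (Rle_dec 0 t); split; intros; lra.
  - assert (Hy2 : mu < y \/ y < -mu).
    { destruct (Rle_dec 0 y). left; rewrite Rabs_pos_eq in Hy; lra. right; rewrite Rabs_left in Hy; lra. }
    assert (Hy0 : y <> 0) by lra.
    set (w := y - mu^2/y).
    assert (Hw : w * y = y*y - mu^2) by (unfold w; field; auto).
    unfold Rle_b. destruct (Rle_dec 0 t) as [Ht|Ht]; destruct Hy2 as [Hy2|Hy2]; split; intros H.
    + nra.
    + nra.
    + nra.
    + nra.
    + nra.
    + nra.
    + nra.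
    + nra.
Qed.

Definition Cfun (S mm x : R) : R :=
  if Rle_b 0 (S + x) then - ((S - x) / 2) + sqrt (((S + x) / 2) ^ 2 + mm ^ 2)
  else - ((S - x) / 2) - sqrt (((S + x) / 2) ^ 2 + mm ^ 2).

Lemma ystar_C mu s theta x : 0 < s ->
  s * (ystar mu (theta + x / s) - theta) = Cfun (s * theta) (s * mu) x.
Proof.
  intros Hs.
  set (t := theta + x / s).
  assert (Et : s * theta + x = s * t) by (unfold t; field; lra).
  set (Q := ((s * theta + x) / 2) ^ 2 + (s * mu) ^ 2).
  assert (HQ : 0 <= Q) by (unfold Q; nra).
  assert (Er : sqrt (t^2 + 4*mu^2) = 2 * sqrt Q / s).
  { apply sqrt_lem_1. nra. unfold Rdiv. apply Rmult_le_pos. generalize (sqrt_pos Q); lra. left; apply Rinv_0_lt_compat; lra.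
    assert (HQ2 : sqrt Q * sqrt Q = Q) by (apply sqrt_sqrt; auto).
    replace (2 * sqrt Q / s * (2 * sqrt Q / s)) with (4 * (sqrt Q * sqrt Q) / (s*s)) by (field; lra).
    rewrite HQ2. unfold Q. rewrite Et. field. lra. }
  unfold ystar, Cfun. fold Q. rewrite Er.
  assert (Eb : Rle_b 0 t = Rle_b 0 (s * theta + x)).
  { rewrite Et. unfold Rle_b. destruct (Rle_dec 0 t), (Rle_dec 0 (s*t)); auto; exfalso; nra. }
  rewrite Eb. destruct (Rle_b 0 (s * theta + x)).
  - replace (s * ((t + 2 * sqrt Q / s) / 2 - theta)) with ((s * t)/2 + sqrt Q - s * theta) by (field; lra).
    rewrite <- Et. field.
  - replace (s * ((t - 2 * sqrt Q / s) / 2 - theta)) with ((s * t)/2 - sqrt Q - s * theta) by (field; lra).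
    rewrite <- Et. field.
Qed.

Lemma iff1 s a th x : 0 < s -> (s*(a - th) <= x <-> a <= th + x/s).
Proof. intros Hs. split; intros H.
 - apply (Rmult_le_reg_l s); auto. replace (s*(th + x/s)) with (s*th + x) by (field; lra). lra.
 - apply (Rmult_le_compat_l s) in H; [|lra]. replace (s*(th+x/s)) with (s*th+x) in H by (field;lra). lra.
Qed.

Lemma iff2 s b th z : 0 < s -> (th + z/s <= b <-> z <= s*(b - th)).
Proof. intros Hs. split; intros H.
 - apply (Rmult_le_compat_l s) in H; [|lra]. replace (s*(th+z/s)) with (s*th+z) in H by (field;lra). lra.
 - apply (Rmult_le_reg_l s); auto. replace (s*(th + z/s)) with (s*th + z) by (field; lra). lra.
Qed.

Lemma F_A_eq mu n theta x : 0 < mu -> 0 < sqrt (INR n) ->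
  F_A mu n theta x = Phi (Cfun (sqrt (INR n) * theta) (sqrt (INR n) * mu) x).
Proof.
  intros Hmu Hs. set (s := sqrt (INR n)) in *.
  unfold F_A, Phi. fold s. f_equal.
  apply functional_extensionality; intros z.
  rewrite <- ystar_C by auto.
  assert (Hiff : s * (thetaA mu (theta + z / s) - theta) <= x <->
                 z <= s * (ystar mu (theta + x / s) - theta)).
  { rewrite iff1, thetaA_le, iff2; auto. reflexivity. }
  unfold Rle_b. destruct (Rle_dec _ x), (Rle_dec z _); auto; exfalso; tauto.
Qed.
Definition Af (S mm x : R) := - ((S - x) / 2) + sqrt (((S + x) / 2) ^ 2 + mm ^ 2).
Definition Bf (S mm x : R) := - ((S - x) / 2) - sqrt (((S + x) / 2) ^ 2 + mm ^ 2).

Lemma cv_eventually (u v : nat -> R) l N : Un_cv u l -> (forall n, (N <= n)%nat -> v n = u n) -> Un_cv v l.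
Proof. intros Hu Hv eps Heps. destruct (Hu eps Heps) as [N1 HN1].
  exists (max N N1). intros n Hn. rewrite Hv by lia. apply HN1. lia. Qed.

Lemma cv_either (u v w : nat -> R) l : Un_cv u l -> Un_cv v l ->
  (forall n, w n = u n \/ w n = v n) -> Un_cv w l.
Proof. intros Hu Hv Hw eps Heps. destruct (Hu eps Heps) as [N1 HN1]. destruct (Hv eps Heps) as [N2 HN2].
  exists (max N1 N2). intros n Hn. destruct (Hw n) as [E|E]; rewrite E. apply HN1; lia. apply HN2; lia. Qed.

Lemma cv_AB (S mm : nat -> R) nu m x : Un_cv S nu -> Un_cv mm m ->
  Un_cv (fun n => Af (S n) (mm n) x) (Af nu m x) /\ Un_cv (fun n => Bf (S n) (mm n) x) (Bf nu m x).
Proof.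
  intros HS Hm.
  assert (H1 := continuity_seq (fun y => - ((y - x) / 2)) S nu ltac:(reg) HS).
  assert (H2 := continuity_seq (fun y => ((y + x) / 2) ^ 2) S nu ltac:(reg) HS).
  assert (H3 := continuity_seq (fun y => y ^ 2) mm m ltac:(reg) Hm).
  assert (H4 := CV_plus _ _ _ _ H2 H3). cbv beta in H4.
  assert (Hnn : 0 <= ((nu + x) / 2) ^ 2 + m ^ 2) by (apply Rplus_le_le_0_compat; apply pow2_ge_0).
  assert (H5 := continuity_seq sqrt _ _ (continuity_pt_sqrt _ Hnn) H4). cbv beta in H5.
  split.
  - exact (CV_plus _ _ _ _ H1 H5).
  - exact (CV_minus _ _ _ _ H1 H5).
Qed.

Lemma sqrt_bounds a b : 0 <= a -> 0 <= b -> b <= sqrt (a^2 + b^2) <= a + b.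
Proof. intros. split.
  - rewrite <- (sqrt_pow2 b) at 1 by auto. apply sqrt_le_1_alt. nra.
  - rewrite <- (sqrt_pow2 (a+b)) by lra. apply sqrt_le_1_alt. nra. Qed.

Lemma sq_bound a k : 0 < a -> 0 <= sqrt (a^2 + k^2) - a <= k^2 / a.
Proof. intros Ha. split.
  - assert (a <= sqrt (a^2 + k^2)). { rewrite <- (sqrt_pow2 a) at 1 by lra. apply sqrt_le_1_alt. nra. } lra.
  - assert (sqrt (a^2+k^2) <= a + k^2/a). 
    { rewrite <- (sqrt_pow2 (a + k^2/a)).
      2:{ assert (0 <= k^2/a) by (unfold Rdiv; apply Rmult_le_pos; [nra| left; apply Rinv_0_lt_compat; lra]). lra. }
      apply sqrt_le_1_alt.
      replace ((a + k^2/a)^2) with (a^2 + 2*k^2 + (k^2/a)^2) by (field; lra). nra. }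
    lra. Qed.

Lemma Cfun_A S mm x : 0 <= S + x -> Cfun S mm x = Af S mm x.
Proof. intros; unfold Cfun, Af; rewrite Rle_b_true; auto. Qed.
Lemma Cfun_B S mm x : S + x < 0 -> Cfun S mm x = Bf S mm x.
Proof. intros; unfold Cfun, Bf; rewrite Rle_b_false; auto. Qed.

Lemma G_eq nu m x : G_lim nu m x = Phi (Cfun nu m x).
Proof. unfold G_lim, Cfun, ind_prop. destruct (Rle_b 0 (x + nu)) eqn:E;
  rewrite (Rplus_comm nu x), E; simpl; ring. Qed.

Lemma jump_eq nu m x : 0 <= m -> nu + x = 0 -> continuity_pt (G_lim nu m) x ->
  Phi (Af nu m x) = Phi (Bf nu m x).
Proof.
  intros Hm Hx Hc.
  assert (key : forall eps, eps > 0 -> Rabs (Phi (Af nu m x) - Phi (Bf nu m x)) < eps + K0 * eps).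
  { intros eps Heps. destruct (Hc eps Heps) as [del [Hdel H]].
    set (h := Rmin (del/2) eps).
    assert (Hh : 0 < h /\ h <= del/2 /\ h <= eps).
    { unfold h; split; [apply Rmin_glb_lt; lra|split; [apply Rmin_l|apply Rmin_r]]. }
    assert (H1 := H (x - h)). simpl in H1. unfold Rdist in H1.
    rewrite !G_eq in H1. rewrite (Cfun_A nu m x) in H1 by lra. rewrite (Cfun_B nu m (x - h)) in H1 by lra.
    assert (H2 : Rabs (Phi (Bf nu m (x - h)) - Phi (Af nu m x)) < eps).
    { apply H1. split. split. exact I. lra.
      replace (x - h - x) with (-h) by ring. rewrite Rabs_Ropp, Rabs_pos_eq; lra. }
    assert (H3 : Rabs (Bf nu m (x - h) - Bf nu m x) <= h).
    { unfold Bf. replace x with (-nu) by lra.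
      replace ((nu + (- nu - h)) / 2) with (-(h/2)) by field.
      replace ((nu + - nu) / 2) with 0 by field.
      replace ((- (h / 2)) ^ 2) with ((h/2)^2) by ring.
      replace (0 ^ 2 + m ^ 2) with (m^2) by ring. rewrite sqrt_pow2 by auto.
      assert (Hh2 : 0 <= h/2) by lra. assert (Hs := sqrt_bounds (h/2) m Hh2 Hm).
      apply Rabs_le. split.
      - replace (- ((nu - (- nu - h)) / 2) - sqrt ((h / 2) ^ 2 + m ^ 2) - (- ((nu - - nu) / 2) - m))
          with (- (h/2) - (sqrt ((h / 2) ^ 2 + m ^ 2) - m)) by field. lra.
      - replace (- ((nu - (- nu - h)) / 2) - sqrt ((h / 2) ^ 2 + m ^ 2) - (- ((nu - - nu) / 2) - m))
          with (- (h/2) - (sqrt ((h / 2) ^ 2 + m ^ 2) - m)) by field. lra. }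
    assert (H4 := Phi_lip (Bf nu m x) (Bf nu m (x - h))).
    assert (H5 : K0 * Rabs (Bf nu m (x - h) - Bf nu m x) <= K0 * eps).
    { apply Rmult_le_compat_l. left; apply K0_pos. lra. }
    replace (Phi (Af nu m x) - Phi (Bf nu m x)) with
      (- (Phi (Bf nu m (x - h)) - Phi (Af nu m x)) + (Phi (Bf nu m (x - h)) - Phi (Bf nu m x))) by ring.
    eapply Rle_lt_trans. apply Rabs_triang. rewrite Rabs_Ropp. lra. }
  destruct (Req_dec (Phi (Af nu m x)) (Phi (Bf nu m x))) as [E|E]; auto.
  exfalso. set (d := Rabs (Phi (Af nu m x) - Phi (Bf nu m x))).
  assert (Hd : 0 < d) by (apply Rabs_pos_lt; lra).
  assert (HK := K0_pos).
  assert (Hk := key (d / (2 * (1 + K0))) ltac:(apply Rdiv_lt_0_compat; lra)).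
  fold d in Hk.
  assert (E2 : d / (2 * (1 + K0)) + K0 * (d / (2 * (1 + K0))) = d / 2) by (field; lra).
  lra.
Qed.

Lemma cv_C_inf (S mm : nat -> R) m x : Un_cv mm m ->
  (cv_infty S \/ cv_infty (fun n => - S n)) -> Un_cv (fun n => Cfun (S n) (mm n) x) x.
Proof.
  intros Hm Hinf eps Heps.
  destruct (Hm 1 ltac:(lra)) as [N1 HN1].
  set (K := (Rabs m + 1)^2).
  assert (HK : 0 < K) by (unfold K; generalize (Rabs_pos m); nra).
  assert (Hmm : forall n, (n >= N1)%nat -> (mm n)^2 <= K).
  { intros n Hn. assert (H := HN1 n Hn). unfold Rdist in H.
    apply Rabs_def2 in H. generalize (RRle_abs m) (RRle_abs (-m)). rewrite Rabs_Ropp.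
    intros. unfold K. nra. }
  destruct Hinf as [Hinf|Hinf].
  - destruct (Hinf (2 * K / eps - x)) as [N2 HN2].
    exists (max N1 N2). intros n Hn. unfold Rdist.
    assert (H1 := HN2 n ltac:(lia)). assert (H2 := Hmm n ltac:(lia)).
    assert (HKe : 0 < K / eps) by (apply Rdiv_lt_0_compat; lra).
    assert (E2 : 2 * K / eps = 2 * (K / eps)) by (unfold Rdiv; ring).
    set (a := (S n + x) / 2).
    assert (Ha : K / eps < a) by (unfold a; lra).
    rewrite Cfun_A by lra. unfold Af.
    replace (- ((S n - x) / 2) + sqrt (((S n + x) / 2) ^ 2 + mm n ^ 2) - x)
      with (sqrt (a ^ 2 + mm n ^ 2) - a) by (unfold a; field).
    assert (Hb := sq_bound a (mm n) ltac:(lra)).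
    rewrite Rabs_pos_eq by lra.
    assert (mm n ^ 2 / a < eps).
    { apply (Rmult_lt_reg_r a); [lra|]. unfold Rdiv. rewrite Rmult_assoc, Rinv_l, Rmult_1_r by lra.
      apply (Rmult_lt_compat_r eps) in Ha; [|lra].
      unfold Rdiv in Ha. rewrite Rmult_assoc, Rinv_l, Rmult_1_r in Ha by lra. nra. }
    lra.
  - destruct (Hinf (2 * K / eps + x)) as [N2 HN2].
    exists (max N1 N2). intros n Hn. unfold Rdist.
    assert (H1 := HN2 n ltac:(lia)). assert (H2 := Hmm n ltac:(lia)).
    assert (HKe : 0 < K / eps) by (apply Rdiv_lt_0_compat; lra).
    assert (E2 : 2 * K / eps = 2 * (K / eps)) by (unfold Rdiv; ring).
    set (a := - ((S n + x) / 2)).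
    assert (Ha : K / eps < a) by (unfold a; lra).
    rewrite Cfun_B by lra. unfold Bf.
    replace (((S n + x) / 2) ^ 2) with (a ^ 2) by (unfold a; ring).
    replace (- ((S n - x) / 2) - sqrt (a ^ 2 + mm n ^ 2) - x)
      with (- (sqrt (a ^ 2 + mm n ^ 2) - a)) by (unfold a; field).
    assert (Hb := sq_bound a (mm n) ltac:(lra)).
    rewrite Rabs_Ropp, Rabs_pos_eq by lra.
    assert (mm n ^ 2 / a < eps).
    { apply (Rmult_lt_reg_r a); [lra|]. unfold Rdiv. rewrite Rmult_assoc, Rinv_l, Rmult_1_r by lra.
      apply (Rmult_lt_compat_r eps) in Ha; [|lra].
      unfold Rdiv in Ha. rewrite Rmult_assoc, Rinv_l, Rmult_1_r in Ha by lra. nra. }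
    lra.
Qed.

Theorem theorem2 (mu : nat -> R) (m : R)
  (Hmu_pos : forall n, 0 < mu n)
  (Hmu0 : Un_cv mu 0)
  (Hmu_m : Un_cv (fun n => sqrt (INR n) * mu n) m)
  (Hm : 0 <= m) :
  (forall (theta : nat -> R) (nu : R),
     Un_cv (fun n => sqrt (INR n) * theta n) nu ->
     cdf_weak_cv (fun n x => F_A (mu n) n (theta n) x) (G_lim nu m))
  /\
  (forall theta : nat -> R,
     (cv_infty (fun n => sqrt (INR n) * theta n) \/
      cv_infty (fun n => - (sqrt (INR n) * theta n))) ->
     cdf_weak_cv (fun n x => F_A (mu n) n (theta n) x) Phi).
Proof.
  assert (Hs : forall n, (1 <= n)%nat -> 0 < sqrt (INR n)).
  { intros n Hn. apply sqrt_lt_R0, lt_0_INR. lia. }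
  split.
  - intros theta nu Hnu x Hc.
    apply cv_eventually with (u := fun n => Phi (Cfun (sqrt (INR n) * theta n) (sqrt (INR n) * mu n) x)) (N := 1%nat).
    2:{ intros n Hn. apply F_A_eq; auto. }
    rewrite G_eq.
    destruct (cv_AB _ _ nu m x Hnu Hmu_m) as [HA HB].
    assert (PA := continuity_seq Phi _ _ (Phi_cont _) HA).
    assert (PB := continuity_seq Phi _ _ (Phi_cont _) HB).
    cbv beta in PA, PB.
    destruct (Rtotal_order (nu + x) 0) as [Hlt|[Heq|Hgt]].
    + rewrite Cfun_B by lra.
      destruct (Hnu (- (nu + x)) ltac:(lra)) as [N HN].
      apply cv_eventually with (1 := PB) (N := N).
      intros n Hn. assert (H := HN n Hn). unfold Rdist in H. apply Rabs_def2 in H.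
      rewrite Cfun_B by lra. reflexivity.
    + rewrite Cfun_A by lra. rewrite (jump_eq nu m x Hm Heq Hc) in PA |- *.
      apply cv_either with (1 := PA) (2 := PB). intros n.
      unfold Cfun, Af, Bf. destruct (Rle_b _ _); [left|right]; reflexivity.
    + rewrite Cfun_A by lra.
      destruct (Hnu (nu + x) ltac:(lra)) as [N HN].
      apply cv_eventually with (1 := PA) (N := N).
      intros n Hn. assert (H := HN n Hn). unfold Rdist in H. apply Rabs_def2 in H.
      rewrite Cfun_A by lra. reflexivity.
  - intros theta Hinf x _.
    apply cv_eventually with (u := fun n => Phi (Cfun (sqrt (INR n) * theta n) (sqrt (INR n) * mu n) x)) (N := 1%nat).
    2:{ intros n Hn. apply F_A_eq; auto. }
    apply (continuity_seq Phi (fun n => Cfun (sqrt (INR n) * theta n) (sqrt (INR n) * mu n) x)).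
    apply Phi_cont. apply cv_C_inf with m; auto.
Qed.
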